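(* Let $(\Omega,P,J)$ be a NAP-space. Then $\ker(J)$ is a fine ideal of $\mathfrak F(\mathcal P_{fin}(\Omega),\mathbb R)$.
   Context: Let $\Omega$ be a nonempty set, $\mathcal P_{fin}(\Omega)$ the set of finite subsets of $\Omega$, and $\mathfrak F=\mathfrak F(\mathcal P_{fin}(\Omega),\mathbb R)$ the real algebra of all functions $\mathcal P_{fin}(\Omega)\to\mathbb R$ with pointwise operations. For $\omega\in\Omega$, $\chi_\lambda(\omega)=1$ if $\omega\in\lambda$ and $0$ otherwise. An ideal $I$ of $\mathfrak F$ is fine if it is maximal and, for every $\omega\in\Omega$, $\lambda\mapsto1-\chi_\lambda(\omega)$ belongs to $I$. A superreal field is an ordered field containing $\mathbb R$ as an ordered subfield. A NAP-space $(\Omega,P,J)$ consists of a superreal field $\mathcal R$, a function $P:\mathcal P(\Omega)\to\mathcal R$ and an algebra homomorphism $J:\mathfrak F\to\mathcal R$ such that: (NAP1) $P(A)\ge0$ for all $A\subseteq\Omega$; (NAP2) $P(A)=1$ iff $A=\Omega$; (NAP3) $P(A\cup B)=P(A)+P(B)$ whenever $A\cap B=\varnothing$; (NAP4) writing $P(A\mid B)=P(A\cap B)/P(B)$ for $B\neq\varnothing$, one has $P(A\mid\lambda)\in\mathbb R$ for every nonempty finite $\lambda$ and every $A$, and $P(A)=J(\varphi_A)$ for every $A\subseteq\Omega$, where $\varphi_A(\lambda)=P(A\mid\lambda)$ for nonempty finite $\lambda$ (and $\varphi_A(\varnothing)$ is an arbitrary fixed real value). *)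

(* Defs.v *)
From Stdlib Require Import Reals ClassicalEpsilon.
From HB Require Import structures.
From mathcomp Require Import all_boot all_order all_algebra.
Set Implicit Arguments. Unset Strict Implicit. Unset Printing Implicit Defensive.
Import Order.TTheory GRing.Theory Num.Theory.
Local Open Scope ring_scope.

Definition Pfin (Omega : Type) : Type :=
  {A : Omega -> Prop | exists l : list Omega, forall x, A x <-> List.In x l}.

Definition FunAlg (Omega : Type) : Type := Pfin Omega -> R.

Definition chi (Omega : Type) (lam : Pfin Omega) (w : Omega) : R :=
  if excluded_middle_informative (proj1_sig lam w) then R1 else R0.

Definition is_ideal (Omega : Type) (I : FunAlg Omega -> Prop) : Prop :=
  I (fun _ => R0) /\
  (forall f g, I f -> I g -> I (fun l => Rplus (f l) (g l))) /\
  (forall f g, I f -> I (fun l => Rmult (g l) (f l))).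

Definition is_maximal_ideal (Omega : Type) (I : FunAlg Omega -> Prop) : Prop :=
  is_ideal I /\ ~ I (fun _ => R1) /\
  (forall K : FunAlg Omega -> Prop, is_ideal K -> (forall f, I f -> K f) ->
     (forall f, K f -> I f) \/ (forall f, K f)).

Definition is_fine_ideal (Omega : Type) (I : FunAlg Omega -> Prop) : Prop :=
  is_maximal_ideal I /\
  (forall w : Omega, I (fun l => Rminus R1 (chi l w))).

(* e : R -> F exhibits R as an ordered subfield of the ordered field F. *)
Definition is_superreal_embedding (F : realFieldType) (e : R -> F) : Prop :=
  (forall x y, e (Rplus x y) = e x + e y) /\
  (forall x y, e (Rmult x y) = e x * e y) /\
  e R1 = 1 /\
  (forall x y, Rle x y <-> e x <= e y).

(* Unital real-algebra homomorphism FunAlg Omega -> F (F an R-algebra via e). *)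
Definition is_real_algebra_hom (Omega : Type) (F : realFieldType) (e : R -> F)
    (J : FunAlg Omega -> F) : Prop :=
  (forall f g, J (fun l => Rplus (f l) (g l)) = J f + J g) /\
  (forall f g, J (fun l => Rmult (f l) (g l)) = J f * J g) /\
  (forall (r : R) f, J (fun l => Rmult r (f l)) = e r * J f) /\
  J (fun _ => R1) = 1.

Definition cond_prob (Omega : Type) (F : realFieldType)
    (P : (Omega -> Prop) -> F) (A B : Omega -> Prop) : F :=
  P (fun x => A x /\ B x) / P B.

Definition nonempty (Omega : Type) (lam : Pfin Omega) : Prop :=
  exists x, proj1_sig lam x.

Definition is_NAP_space (Omega : Type) (F : realFieldType) (e : R -> F)
    (P : (Omega -> Prop) -> F) (J : FunAlg Omega -> F) : Prop :=
  inhabited Omega /\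
  is_superreal_embedding e /\
  is_real_algebra_hom e J /\
  (forall A, 0 <= P A) /\
  (forall A, P A = 1 <-> (forall x, A x)) /\
  (forall A B, (forall x, ~ (A x /\ B x)) ->
                P (fun x => A x \/ B x) = P A + P B) /\
  (forall A (lam : Pfin Omega), nonempty lam ->
     exists r : R, cond_prob P A (proj1_sig lam) = e r) /\
  (* NAP4, P(A) = J(phi_A), with phi_A(empty) a fixed real c0 *)
  (exists c0 : R, forall A (phi : FunAlg Omega),
     (forall lam, nonempty lam -> e (phi lam) = cond_prob P A (proj1_sig lam)) ->
     (forall lam, ~ nonempty lam -> phi lam = c0) ->
     P A = J phi).

(* Main.v *)
Require Import Defs.
From Stdlib Require Import Reals.
From mathcomp Require Import all_boot all_order all_algebra.
From Stdlib Require Import FunctionalExtensionality PropExtensionality ClassicalEpsilon Classical.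
Ltac rring := ring.
Ltac rfield := field.
From mathcomp Require Import ring lra.
Import Order.TTheory GRing.Theory Num.Theory.
Local Open Scope ring_scope.

Section H.
Variables (Omega : Type) (F : realFieldType) (e : R -> F) (J : FunAlg Omega -> F).
Hypothesis He : is_superreal_embedding e.
Hypothesis HJ : is_real_algebra_hom e J.

Lemma Jext (f g : FunAlg Omega) : (forall l, f l = g l) -> J f = J g.
Proof. by move=> H; rewrite (functional_extensionality f g H). Qed.

Lemma e0 : e R0 = 0.
Proof.
case: He => Ha _. have := Ha R0 R0. rewrite Rplus_0_r => H. lra.
Qed.

Lemma einj x y : e x = e y -> x = y.
Proof.
case: He => _ [_ [_ Ho]] H. apply: Rle_antisym; apply/Ho; by rewrite H.
Qed.

Lemma em1 : e (Ropp R1) = -1.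
Proof.
case: He => Ha [_ [H1 _]]. have := Ha R1 (Ropp R1). rewrite Rplus_opp_r e0 H1 => H. lra.
Qed.

Lemma Jsub f g : J (fun l => Rminus (f l) (g l)) = J f - J g.
Proof.
case: HJ => Ha [_ [Hs _]].
rewrite (@Jext _ (fun l => Rplus (f l) (Rmult (Ropp R1) (g l)))); last first.
  by move=> l; rewrite /Rminus; f_equal; rring.
by rewrite Ha Hs em1 mulN1r.
Qed.

Lemma Jconst r : J (fun _ => r) = e r.
Proof.
case: HJ => _ [_ [Hs H1]].
rewrite (@Jext _ (fun l => Rmult r ((fun _ => R1) l))); last by move=> l; rring.
by rewrite Hs H1 mulr1.
Qed.

Lemma J0 : J (fun _ => R0) = 0.
Proof. by rewrite Jconst e0. Qed.

End H.
Arguments Jext {Omega F J}.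
Arguments e0 {F e}.
Arguments einj {F e}.
Arguments em1 {F e}.
Arguments Jsub {Omega F e J}.
Arguments Jconst {Omega F e J}.
Arguments J0 {Omega F e J}.

Lemma setext (Omega : Type) (A B : Omega -> Prop) : (forall x, A x <-> B x) -> A = B.
Proof. move=> H; apply: functional_extensionality => x; exact: propositional_extensionality. Qed.

Theorem mainTheorem7 (Omega : Type) (F : realFieldType) (e : R -> F)
    (P : (Omega -> Prop) -> F) (J : FunAlg Omega -> F) :
  is_NAP_space e P J -> is_fine_ideal (fun f : FunAlg Omega => J f = 0%R).
Proof.
move=> [_ [He [HJ [P1 [P2 [P3 [P4r [c0 P4]]]]]]]].
have HJ' := HJ. case: HJ' => Ha [Hm [Hs H1]].
have Hid : is_ideal (fun f : FunAlg Omega => J f = 0).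
  split; first exact: (J0 He HJ).
  split; first by move=> f g /= Hf Hg; rewrite Ha Hf Hg addr0.
  by move=> f g /= Hf; rewrite Hm Hf mulr0.
have Pempty : P (fun _ => False) = 0.
  have := P3 (fun _ => False) (fun _ => False) (fun x => fun h => proj1 h).
  rewrite (@setext _ (fun x => False \/ False) (fun _ => False)); last by move=> x; tauto.
  move=> H; lra.
have Pne : forall A : Omega -> Prop, (exists x, A x) -> P A != 0.
  move=> A [x Ax]; apply/eqP => H0.
  have := P3 A (fun x => ~ A x) (fun x h => proj2 h (proj1 h)).
  rewrite (@setext _ (fun x => A x \/ ~ A x) (fun _ => True)); last by move=> y; tauto.
  have -> : P (fun _ => True) = 1 by apply/P2.
  rewrite H0 add0r => /esym /P2 H. exact: H x Ax.
have phiex : forall A : Omega -> Prop, exists phi : FunAlg Omega,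
    (forall lam, nonempty lam -> e (phi lam) = cond_prob P A (proj1_sig lam)) /\
    (forall lam, ~ nonempty lam -> phi lam = c0).
  move=> A.
  exists (fun lam => match excluded_middle_informative (nonempty lam) with
     | left h => proj1_sig (constructive_indefinite_description _ (P4r A lam h))
     | right _ => c0 end).
  split=> lam h; case: excluded_middle_informative => // h'.
  by case: constructive_indefinite_description.
pose delta (lam : Pfin Omega) := if excluded_middle_informative (nonempty lam) then R0 else R1.
have Jdelta : J delta = 0.
  have [pO [pO1 pO2]] := phiex (fun _ => True).
  have [pE [pE1 pE2]] := phiex (fun _ => False).
  have eq1 : J (fun l => Rminus (pO l) (pE l)) = 1.
    rewrite (Jsub He HJ) -(P4 _ _ pO1 pO2) -(P4 _ _ pE1 pE2) Pempty subr0. by apply/P2.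
  rewrite -(@Jext _ _ J (fun l => Rminus R1 (Rminus (pO l) (pE l))) delta).
    by rewrite (Jsub He HJ) H1 eq1 subrr.
  move=> l; rewrite /delta; case: excluded_middle_informative => h.
  - have a : pO l = R1.
      apply: (einj He). rewrite pO1 // /cond_prob.
      have [_ [_ [He1 _]]] := He; rewrite He1.
      rewrite (@setext _ (fun x => True /\ _) (proj1_sig l)); last by move=> x; tauto.
      rewrite divff //. by apply: Pne.
    have b : pE l = R0.
      apply: (einj He). rewrite pE1 // /cond_prob (e0 He).
      rewrite (@setext _ (fun x => False /\ _) (fun _ => False)); last by move=> x; tauto.
      by rewrite Pempty mul0r.
    rewrite /= a b; rring.
  - rewrite /= pO2 // pE2 //; rring.
split.
  split; first exact: Hid.
  split; first by rewrite /= H1; apply/eqP; exact: oner_neq0.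
  move=> K [K0 [KD KM]] Hsub.
  case: (classic (exists f, K f /\ J f <> 0)); last first.
    move=> H; left => f Kf; apply: NNPP => Hf; apply: H; by exists f.
  move=> [f [Kf Jf]]; right.
  pose g l := if Req_appart_dec (f l) R0 then R0 else Rinv (f l).
  have Kfg : K (fun l => Rmult (g l) (f l)) by apply: KM.
  have Jfg : J (fun l => Rmult (g l) (f l)) = 1.
    have : J f * J (fun l => Rmult (g l) (f l)) = J f * 1.
      rewrite -Hm mulr1; apply: Jext => l; rewrite /g.
      case: Req_appart_dec => [h0|h]; first by rewrite /= h0; rring.
      rewrite /=; rfield. by case: h => h; [apply: Rlt_not_eq | apply: Rgt_not_eq].
    move/(mulfI (x:= J f)); apply; exact/eqP.
  have K1fg : K (fun l => Rminus R1 (Rmult (g l) (f l))).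
    apply: Hsub => /=; by rewrite (Jsub He HJ) H1 Jfg subrr.
  have K1 : K (fun _ => R1).
    have E : (fun l => Rplus (Rmult (g l) (f l)) (Rminus R1 (Rmult (g l) (f l)))) = (fun _ => R1).
      by apply: functional_extensionality => l; rring.
    by rewrite -E; apply: KD.
  move=> h.
  have E : (fun l => Rmult (h l) R1) = h by apply: functional_extensionality => l; rring.
  by rewrite -E; apply: KM.
move=> w /=.
have [ph [ph1 ph2]] := phiex (fun x => x = w).
have Pw : P (fun x => x = w) = J ph := P4 _ _ ph1 ph2.
have eqh : J (fun l => Rmult (Rminus R1 (chi l w)) (ph l)) = J (fun l => Rmult c0 (delta l)).
  apply: Jext => l; rewrite /chi /delta.
  case: excluded_middle_informative => hw.
    case: excluded_middle_informative => hn; first by rewrite /=; rring.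
    by exfalso; apply: hn; exists w.
  case: excluded_middle_informative => hn; last by rewrite /= ph2 //; rring.
  have : ph l = R0.
    apply: (einj He); rewrite ph1 // (e0 He) /cond_prob.
    rewrite (@setext _ (fun x => x = w /\ _) (fun _ => False)); last first.
      by move=> x; split=> // -[->].
    by rewrite Pempty mul0r.
  move=> ->; rewrite /=; rring.
move: eqh; rewrite (Hm (fun l => Rminus R1 (chi l w)) ph) (Hs c0 delta) Jdelta mulr0 -Pw => /eqP.
rewrite mulf_eq0.
case/orP => /eqP // /eqP H; exfalso; move: H; apply/negP; apply: Pne; by exists w.
Qed.
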